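(* Let $G_0,G_1\in\mathbb{Z}$ with $\gcd(G_0,G_1)=1$, let $(G_n)_{n\ge0}$ satisfy $G_n=G_{n-1}+G_{n-2}$ for $n\ge2$, and let $\mu = G_1^2 - G_0 G_1 - G_0^2$. For every even integer $k \geq 1$ (i.e. $k\ge 2$ even), $$\mathcal{G}^2_{G_0,G_1}(k) = \begin{cases} F_k, & \text{if $5$ does not divide $\mu$},\\ 5 F_k, & \text{if $5$ divides $\mu$},\end{cases}$$ where $F_k$ is the $k$-th Fibonacci number.
   Context: $\mathcal{G}^2_{G_0,G_1}(k)=\gcd\{\sum_{i=1}^k G_{n+i}^2 : n\ge 0\}$ (nonnegative gcd of this infinite set). $F_0=0$, $F_1=1$, $F_n=F_{n-1}+F_{n-2}$. *)

(* Defs.v *)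
From Stdlib Require Import ZArith.
Open Scope Z_scope.

Fixpoint fib_aux (n : nat) : Z * Z :=
  match n with
  | O => (0, 1)
  | S m => let (a, b) := fib_aux m in (b, a + b)
  end.
Definition F (n : nat) : Z := fst (fib_aux n).

Definition is_gcd_of_set (S : Z -> Prop) (d : Z) : Prop :=
  0 <= d /\ (forall x, S x -> (d | x)) /\
  (forall e, (forall x, S x -> (e | x)) -> (e | d)).

Fixpoint sum_sq (G : nat -> Z) (n k : nat) : Z :=
  match k with
  | O => 0
  | S k' => sum_sq G n k' + (G (n + k)%nat) ^ 2
  end.

Definition sq_sum_set (G : nat -> Z) (k : nat) : Z -> Prop :=
  fun x => exists n : nat, x = sum_sq G n k.

(* Main.v *)
Require Import Defs.
From Stdlib Require Import ZArith Lia.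
Open Scope Z_scope.

Lemma F_rec i : F (S (S i)) = F (S i) + F i.
Proof. unfold F; simpl. destruct (fib_aux i); simpl. ring. Qed.

Lemma F0 : F 0 = 0. Proof. reflexivity. Qed.
Lemma F1 : F 1 = 1. Proof. reflexivity. Qed.

Lemma F_nonneg i : 0 <= F i /\ 0 <= F (S i).
Proof.
  induction i as [|i [IH1 IH2]]. split; cbv; discriminate.
  split; auto. rewrite F_rec. lia.
Qed.

Section Seq.
Variable H : nat -> Z.
Hypothesis hr : forall t, H (S (S t)) = H (S t) + H t.

Lemma shift n i0 : H (n + i0)%nat = (F (S i0) - F i0) * H n + F i0 * H (S n).
Proof.
  assert (forall i, H (n + i)%nat = (F (S i) - F i) * H n + F i * H (S n) /\
                    H (n + S i)%nat = (F (S (S i)) - F (S i)) * H n + F (S i) * H (S n)).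
  { induction i as [|i IH1 ].
    - rewrite !Nat.add_0_r, Nat.add_1_r. rewrite F_rec, F0, F1. split; ring.
    - destruct IH1 as [A B]. split; [exact B|].
      replace (n + S (S i))%nat with (S (S (n + i))) by lia.
      rewrite hr. replace (S (n + i)) with (n + S i)%nat by lia.
      rewrite A, B, !F_rec. ring. }
  apply H0.
Qed.

Definition tt i := H (S i) ^ 2 - H i * H (S i) - H i ^ 2.

Lemma tt_step i : tt (S i) = - tt i.
Proof. unfold tt. rewrite hr. ring. Qed.

Lemma tt_pm i : tt i = tt 0 \/ tt i = - tt 0.
Proof. induction i as [|i IH]. left; auto. rewrite tt_step. lia. Qed.

Lemma tt_even j : tt (2 * j) = tt 0.
Proof. induction j as [|j IH]. reflexivity.
  replace (2 * S j)%nat with (S (S (2 * j))) by lia. rewrite !tt_step. lia. Qed.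

Lemma tele n k : sum_sq H n k = H (n + k)%nat * H (S (n + k)) - H n * H (S n).
Proof.
  induction k as [|k IH]; cbn [sum_sq]. rewrite Nat.add_0_r. ring.
  rewrite IH. replace (n + S k)%nat with (S (n + k)) by lia. rewrite hr. ring.
Qed.

Lemma bez m : (exists u v, u * H 0 + v * H 1 = 1) -> exists u v, u * H m + v * H (S m) = 1.
Proof.
  intros B. induction m as [|m IH]. exact B.
  destruct IH as [u [v E]]. exists (v - u), u. rewrite hr. lia.
Qed.

End Seq.

Lemma F_double j : F (2 * j) = F j * (2 * F (S j) - F j) /\ F (S (2 * j)) = F j ^ 2 + F (S j) ^ 2.
Proof.
  pose proof (shift F F_rec j j) as A. pose proof (shift F F_rec j (S j)) as B.
  replace (j + j)%nat with (2 * j)%nat in A by lia.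
  replace (j + S j)%nat with (S (2 * j)) in B by lia.
  rewrite F_rec in B. split; [rewrite A|rewrite B]; ring.
Qed.

Lemma main_id H (hr : forall t, H (S (S t)) = H (S t) + H t) n j :
  sum_sq H n (2 * j) = F (2 * j) * (H (n + j)%nat ^ 2 + H (S (n + j)) ^ 2).
Proof.
  rewrite (tele H hr).
  rewrite (shift H hr n (2*j)), (shift H hr n j).
  replace (S (n + 2 * j)) with (n + S (2 * j))%nat by lia.
  replace (S (n + j)) with (n + S j)%nat by lia.
  rewrite (shift H hr n (S (2*j))), (shift H hr n (S j)).
  set (a := H n). set (b := H (S n)).
  pose proof (tt_even F F_rec j) as C. unfold tt in C. rewrite F0, F1 in C.
  destruct (F_double j) as [D1 D2].
  rewrite !F_rec.
  set (A2 := F (2*j)) in *. set (A1 := F (S (2*j))) in *.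
  set (p := F j) in *. set (q := F (S j)) in *.

  assert (U : ((q - p) * a + p * b) ^ 2 + ((q + p - q) * a + q * b) ^ 2
     = (A1 - A2) * a^2 + 2 * A2 * a * b + A1 * b^2) by (rewrite D1, D2; ring).
  rewrite U.
  transitivity (A2 * ((A1 - A2) * a ^ 2 + 2 * A2 * a * b + A1 * b ^ 2) + a*b*(A1^2 - A1*A2 - A2^2 - 1)).
  ring. replace (A1^2 - A1*A2 - A2^2) with (A1^2 - A2*A1 - A2^2) by ring. rewrite C. ring.
Qed.

Lemma dlin e x y a b : (e | x) -> (e | y) -> (e | a * x + b * y).
Proof. intros [c1 H1] [c2 H2]. exists (a * c1 + b * c2). subst. ring. Qed.

Lemma five_sq z : (5 | z ^ 2) -> (5 | z).
Proof.
  intros [c Hc]. pose proof (Z.div_mod z 5 ltac:(lia)) as D.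
  pose proof (Z.mod_pos_bound z 5 ltac:(lia)) as Bd.
  set (r := z mod 5) in *. set (q := z / 5) in *.
  assert (E : r ^ 2 = 5 * (c - 5 * q ^ 2 - 2 * q * r)).
  { transitivity ((5*q+r)^2 - 5*(5*q^2+2*q*r)). ring. rewrite <- D, Hc. ring. }
  assert (r = 0) by (assert (r = 0 \/ r = 1 \/ r = 2 \/ r = 3 \/ r = 4) as HH by lia;
    destruct HH as [->|[->|[->|[->| ->]]]]; lia).
  exists q. lia.
Qed.

Theorem theorem4p7 (G : nat -> Z)
  (hcop : Z.gcd (G 0%nat) (G 1%nat) = 1)
  (hrec : forall n : nat, (2 <= n)%nat -> G n = G (n - 1)%nat + G (n - 2)%nat)
  (k : nat) (hk : (1 <= k)%nat) (hev : Nat.Even k) :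
  let mu := G 1%nat ^ 2 - G 0%nat * G 1%nat - G 0%nat ^ 2 in
  is_gcd_of_set (sq_sum_set G k)
    (if (mu mod 5 =? 0) then 5 * F k else F k).
Proof.
  intro mu.
  assert (hr : forall t, G (S (S t)) = G (S t) + G t).
  { intro t. rewrite (hrec (S (S t))) by lia. f_equal; f_equal; lia. }
  destruct hev as [j Hj]. subst k.
  assert (Hmu : forall m, tt G m = mu \/ tt G m = - mu) by (intro m; apply (tt_pm G hr)).
  assert (B0 : exists u v, u * G 0%nat + v * G 1%nat = 1).
  { exact (Z.gcd_bezout _ _ _ hcop). }
  set (P := fun m => G m ^ 2 + G (S m) ^ 2).
  assert (KA : forall m, exists al be, al * P m + be * P (S m) = 5).
  { intro m. destruct (bez G hr m B0) as [u [v E]].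
    unfold P. rewrite (hr m). set (x := G m) in *. set (y := G (S m)) in *.
    set (al := u^3*(5*x+2*y) + 3*u^2*v*y + 3*u*v^2*(-2*y) + v^3*(4*y)).
    set (be := u^3*(-x-2*y) + 3*u^2*v*(2*x-y) + 3*u*v^2*(x+2*y) + v^3*(y-2*x)).
    exists (al - be), be.
    transitivity (5 * (u * x + v * y) ^ 3). unfold al, be. ring.
    rewrite E. ring. }
  assert (KB : (5 | mu) -> forall m, (5 | P m)).
  { intros H5 m. assert (H5' : (5 | tt G m)) by (destruct (Hmu m) as [-> | ->]; auto;
      apply Z.divide_opp_r; auto).
    unfold tt in H5'. unfold P.
    set (x := G m) in *. set (y := G (S m)) in *.
    assert (5 | (y + 2 * x) ^ 2).
    { replace ((y + 2 * x) ^ 2) with (1 * (y ^ 2 - x * y - x ^ 2) + 5 * (x * y + x ^ 2)) by ring.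
      apply Z.divide_add_r; [apply Z.divide_mul_r; auto | apply Z.divide_factor_l]. }
    apply five_sq in H. destruct H as [w Hw].
    replace (x ^ 2 + y ^ 2) with (5 * (x^2 - 4 * w * x + 5 * w ^ 2)) by
      (replace y with (w * 5 - 2 * x) by lia; ring).
    apply Z.divide_factor_l. }
  assert (KC : forall m, tt G m = -3 * P m + 2 * P (S m) + (-5) * (G m * G (S m))).
  { intro m. unfold tt, P. rewrite hr. ring. }
  assert (SE : forall n, sum_sq G n (2 * j) = F (2 * j) * P (n + j)%nat).
  { intro n. rewrite (main_id G hr). reflexivity. }
  destruct (F_nonneg (2 * j)) as [Fpos _].
  assert (Hd : (mu mod 5 =? 0) = true <-> (5 | mu)).
  { rewrite Z.eqb_eq. apply Z.mod_divide. lia. }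
  split; [|split].
  - destruct (mu mod 5 =? 0); lia.
  - intros x [n ->]. rewrite SE. destruct (mu mod 5 =? 0) eqn:E.
    + destruct (KB (proj1 Hd eq_refl) (n + j)%nat) as [c Hc]. rewrite Hc.
      exists c. ring.
    + apply Z.divide_factor_l.
  - intros e He.
    assert (E0 : (e | F (2 * j) * P j)).
    { apply He. exists 0%nat. rewrite SE. reflexivity. }
    assert (E1 : (e | F (2 * j) * P (S j))).
    { apply He. exists 1%nat. rewrite SE. reflexivity. }
    assert (E5 : (e | 5 * F (2 * j))).
    { destruct (KA j) as [al [be Hab]].
      replace (5 * F (2 * j)) with (al * (F (2 * j) * P j) + be * (F (2 * j) * P (S j)))
        by (rewrite <- Hab; ring).
      apply dlin; auto. }
    destruct (mu mod 5 =? 0) eqn:E; auto.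
    assert (Et : (e | F (2 * j) * tt G j)).
    { rewrite KC.
      replace (F (2 * j) * (-3 * P j + 2 * P (S j) + -5 * (G j * G (S j)))) with
        ((-3) * (F (2 * j) * P j) + 2 * (F (2 * j) * P (S j)) + (-(G j * G (S j))) * (5 * F (2 * j)))
        by ring.
      apply Z.divide_add_r; [apply dlin|apply Z.divide_mul_r]; auto. }
    assert (Em : (e | F (2 * j) * mu)).
    { destruct (Hmu j) as [Hm | Hm]; rewrite Hm in Et; auto.
      replace (F (2 * j) * mu) with ((-1) * (F (2 * j) * - mu)) by ring.
      apply Z.divide_mul_r; auto. }
    pose proof (Z.div_mod mu 5 ltac:(lia)) as D.
    pose proof (Z.mod_pos_bound mu 5 ltac:(lia)) as Bd.
    apply Z.eqb_neq in E.
    set (r := mu mod 5) in *. set (q := mu / 5) in *.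
    assert (Er : (e | r * F (2 * j))).
    { replace (r * F (2 * j)) with (1 * (F (2 * j) * mu) + (-q) * (5 * F (2 * j)))
        by (rewrite D; ring).
      apply dlin; auto. }
    assert (r = 1 \/ r = 2 \/ r = 3 \/ r = 4) as HH by lia.
    destruct HH as [Hr|[Hr|[Hr|Hr]]]; rewrite Hr in Er.
    + replace (F (2 * j)) with (1 * F (2 * j)) by ring. exact Er.
    + replace (F (2 * j)) with ((-2) * (2 * F (2 * j)) + 1 * (5 * F (2 * j))) by ring.
      apply dlin; auto.
    + replace (F (2 * j)) with (2 * (3 * F (2 * j)) + (-1) * (5 * F (2 * j))) by ring.
      apply dlin; auto.
    + replace (F (2 * j)) with ((-1) * (4 * F (2 * j)) + 1 * (5 * F (2 * j))) by ring.
      apply dlin; auto.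
Qed.
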